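(* Consider the heterogeneous subgradient algorithm as in the setting below. Suppose $\{\mathbb G(t)\}$ is uniformly strongly connected by sub-sequences of length $L$ and $\|g_i(t)\|\le G$ for all $i,t$, for some $G>0$. Let $\eta,\mu$ be constants as described below. Then for all $t\ge0$ and $i\in\mathcal V$, $$\Big\|z_i(t+1)-\frac1n\sum_{k=1}^nx_k(t)\Big\|\le\frac8\eta\mu^t\sum_{k=1}^n\|x_k(0)\|+\frac{8nG}{\eta\mu}\sum_{s=0}^t\mu^{t-s}\alpha(s).$$ If in addition $\{\alpha(t)\}$ is positive, non-increasing, with $\sum_t\alpha(t)=\infty$ and $\sum_t\alpha^2(t)<\infty$, then for all $t\ge0$ and $i\in\mathcal V$, $$\Big\|z_i(t+1)-\frac1n\sum_{k=1}^nx_k(t)\Big\|\le\frac8\eta\mu^t\sum_{k=1}^n\|x_k(0)\|+\frac{8nG}{\eta\mu(1-\mu)}\big(\alpha(0)\mu^{t/2}+\alpha(\lceil t/2\rceil)\big).$$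
   Context: Setting. Fix $n$ agents, $\mathcal V=\{1,\dots,n\}$. For each $t\in\{0,1,2,\dots\}$, $\mathbb G(t)=(\mathcal V,\mathcal E(t))$ is a directed graph containing a self-arc $(i,i)$ at every vertex; $\mathcal N_i(t)=\{j:(j,i)\in\mathcal E(t)\}$ and $\mathcal N_i^-(t)=\{k:(i,k)\in\mathcal E(t)\}$. Weights $w_{ij}(t)$ are positive for $j\in\mathcal N_i(t)$ and $w_{ij}(t)=0$ otherwise, and satisfy: there is $\beta>0$ with $w_{ij}(t)\ge\beta$ whenever $j\in\mathcal N_i(t)$, and $\sum_{j\in\mathcal N_i^-(t)}w_{ji}(t)=1$ for all $i,t$. Write $\Phi_W(t,\tau)=W(t-1)\cdots W(\tau)$ for $t>\tau$, where $W(t)=[w_{ij}(t)]$. Uniformly strongly connected by sub-sequences of length $L$: for every $t\ge0$ the graph with vertex set $\mathcal V$ and edge set $\bigcup_{k=t}^{t+L-1}\mathcal E(k)$ is strongly connected. Heterogeneous subgradient algorithm: each agent $i$ has a convex $f_i:\mathbb R^d\to\mathbb R$ and an arbitrary switching signal $\sigma_i(t)\in\{0,1\}$. With stepsizes $\alpha(t)>0$: $x_i(t+1)=\sum_{j\in\mathcal N_i(t)}w_{ij}(t)[x_j(t)-\alpha(t)g_j(t)\sigma_j(t)]-\alpha(t)g_i(t)(1-\sigma_i(t))$, $x_i(0)\in\mathbb R^d$; $y_i(t+1)=\sum_{j\in\mathcal N_i(t)}w_{ij}(t)y_j(t)$, $y_i(0)=1$; $z_i(t)=x_i(t)/y_i(t)$;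 $g_i(t)$ is a subgradient of $f_i$ at $z_i(t)$. (All $\sigma_i\equiv1$ gives subgradient-push; all $\sigma_i\equiv0$ gives push-subgradient.) Constants: $\eta>0$ is any constant with $y_i(t)\ge\eta$ for all $i,t$ (e.g. $\eta=n^{-nL}$); $\mu\in(0,1)$ is any constant for which there exist stochastic vectors $\phi(t)\in\mathbb R^n$ with $|[\Phi_W(t+1,s)]_{ij}-\phi_i(t)|\le4\mu^{t-s}$ for all $i,j\in\mathcal V$, $t\ge s\ge0$ (e.g. $\mu=(1-n^{-nL})^{1/L}$). *)

(* Defs.v *)
From HB Require Import structures.
From mathcomp Require Import all_boot all_order all_algebra.
From mathcomp Require Import all_classical all_reals all_analysis.
Set Implicit Arguments. Unset Strict Implicit. Unset Printing Implicit Defensive.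
Import Order.TTheory GRing.Theory Num.Theory.
Local Open Scope ring_scope.

Definition dotv {R : realType} {d : nat} (u v : 'rV[R]_d) : R :=
  \sum_(k < d) u 0 k * v 0 k.
Definition enorm {R : realType} {d : nat} (v : 'rV[R]_d) : R :=
  Num.sqrt (\sum_(k < d) v 0 k ^+ 2).

Definition convex_fun {R : realType} {d : nat} (f : 'rV[R]_d -> R) : Prop :=
  forall (x y : 'rV[R]_d) (l : R), 0 <= l <= 1 ->
    f (l *: x + (1 - l) *: y) <= l * f x + (1 - l) * f y.

Definition is_subgradient {R : realType} {d : nat} (f : 'rV[R]_d -> R)
  (z g : 'rV[R]_d) : Prop :=
  forall y, f z + dotv g (y - z) <= f y.

(* phiW W s k = W(s+k-1) ... W(s)  (k factors);
   hence Phi_W(t, tau) = phiW W tau (t - tau) for t > tau. *)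
Fixpoint phiW {R : realType} {n : nat} (W : nat -> 'M[R]_n) (s k : nat)
  : 'M[R]_n :=
  match k with
  | 0 => 1%:M
  | k'.+1 => W (s + k')%N *m phiW W s k'
  end.

Definition Phi_W {R : realType} {n : nat} (W : nat -> 'M[R]_n) (t tau : nat)
  : 'M[R]_n := phiW W tau (t - tau).

(* E t j i  means the arc (j,i) belongs to E(t). Strong connectivity of the
   union graph over the window [t, t+L-1]. *)
Definition USC {n : nat} (E : nat -> rel 'I_n) (L : nat) : Prop :=
  forall t : nat, forall u v : 'I_n,
    connect (fun a b => [exists k : 'I_L, E (t + k)%N a b]) u v.

(* Main.v *)
Set Warnings "-all".
Require Import Defs.
From HB Require Import structures.
From mathcomp Require Import all_boot all_order all_algebra.
From mathcomp Require Import all_classical all_reals all_analysis.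
From mathcomp Require Import ring lra zify.
Import Order.TTheory GRing.Theory Num.Theory.
Local Open Scope classical_set_scope.
Local Open Scope ring_scope.
Section EN.
Context {R : realType} {d : nat}.
Implicit Types u v : 'rV[R]_d.

Lemma enorm_ge0 v : 0 <= enorm v.
Proof. exact: sqrtr_ge0. Qed.

Lemma enormZ (c : R) v : enorm (c *: v) = `|c| * enorm v.
Proof.
rewrite /enorm.
have -> : \sum_(k < d) (c *: v) 0 k ^+ 2 = c ^+ 2 * \sum_(k < d) v 0 k ^+ 2.
  by rewrite mulr_sumr; apply: eq_bigr => k _; rewrite mxE exprMn.
by rewrite sqrtrM ?sqr_ge0 // sqrtr_sqr.
Qed.

Lemma enormN v : enorm (- v) = enorm v.
Proof. by rewrite -scaleN1r enormZ normrN normr1 mul1r. Qed.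

Lemma sumsq_eq0 v : \sum_(k < d) v 0 k ^+ 2 = 0 -> forall k, v 0 k = 0.
Proof.
move=> H k.
have /eqP := H; rewrite psumr_eq0; last by move=> i _; exact: sqr_ge0.
by move/allP => /(_ k (mem_index_enum _)) /=; rewrite sqrf_eq0 => /eqP.
Qed.

Lemma CS u v : \sum_(k < d) u 0 k * v 0 k <= enorm u * enorm v.
Proof.
set A := \sum_(k < d) u 0 k ^+ 2. set B := \sum_(k < d) v 0 k ^+ 2.
set C := \sum_(k < d) u 0 k * v 0 k.
have A0 : 0 <= A by apply: sumr_ge0 => k _; exact: sqr_ge0.
have B0 : 0 <= B by apply: sumr_ge0 => k _; exact: sqr_ge0.
rewrite /enorm -/A -/B.
pose a : R := Num.sqrt A. pose b : R := Num.sqrt B.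
rewrite -/a -/b.
have a0 : 0 <= a by exact: sqrtr_ge0.
have b0 : 0 <= b by exact: sqrtr_ge0.
have aa : a ^+ 2 = A by rewrite sqr_sqrtr.
have bb : b ^+ 2 = B by rewrite sqr_sqrtr.
have key : 0 <= \sum_(k < d) (b * u 0 k - a * v 0 k) ^+ 2.
  by apply: sumr_ge0 => k _; exact: sqr_ge0.
have ekey : \sum_(k < d) (b * u 0 k - a * v 0 k) ^+ 2 = 2 * (a * b) * (a * b - C).
  have -> : \sum_(k < d) (b * u 0 k - a * v 0 k) ^+ 2 =
     b ^+ 2 * A - 2 * (a * b) * C + a ^+ 2 * B.
    rewrite (eq_bigr (fun k => b ^+ 2 * u 0 k ^+ 2 - 2 * (a * b) * (u 0 k * v 0 k) + a ^+ 2 * v 0 k ^+ 2)); last by move=> k _; ring.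
    by rewrite big_split /= sumrB /A /B /C !mulr_sumr.
  by rewrite -aa -bb; ring.
rewrite ekey in key.
have [ab0|abpos] := eqVneq (a * b) 0.
  move: ab0 => /eqP; rewrite mulf_eq0 => /orP [] /eqP H.
  - have : A = 0 by rewrite -aa H expr2 mulr0.
    move/sumsq_eq0 => Hu. rewrite /C big1 ?H ?mul0r // => k _. by rewrite Hu mul0r.
  - have : B = 0 by rewrite -bb H expr2 mulr0.
    move/sumsq_eq0 => Hv. rewrite /C big1 ?H ?mulr0 // => k _. by rewrite Hv mulr0.
have abp : 0 < a * b by rewrite lt_def abpos mulr_ge0.
rewrite -subr_ge0. 
by rewrite pmulr_rge0 // in key; rewrite mulr_gt0.
Qed.

Lemma enormD u v : enorm (u + v) <= enorm u + enorm v.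
Proof.
have h := CS u v.
have a0 := enorm_ge0 u. have b0 := enorm_ge0 v.
rewrite -[X in _ <= X]ger0_norm ?addr_ge0 // -sqrtr_sqr.
apply: ler_wsqrtr.
have -> : \sum_(k < d) (u + v) 0 k ^+ 2 =
   \sum_(k < d) u 0 k ^+ 2 + 2 * \sum_(k < d) u 0 k * v 0 k + \sum_(k < d) v 0 k ^+ 2.
  rewrite mulr_sumr -!big_split /=; apply: eq_bigr => k _; rewrite mxE; ring.
have ea : \sum_(k < d) u 0 k ^+ 2 = enorm u ^+ 2.
  by rewrite sqr_sqrtr //; apply: sumr_ge0 => k _; exact: sqr_ge0.
have eb : \sum_(k < d) v 0 k ^+ 2 = enorm v ^+ 2.
  by rewrite sqr_sqrtr //; apply: sumr_ge0 => k _; exact: sqr_ge0.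
rewrite ea eb; nra.
Qed.

Lemma enormB u v : enorm (u - v) <= enorm u + enorm v.
Proof. by rewrite -(enormN v); exact: enormD. Qed.

Lemma enorm_sum (I : Type) (r : seq I) (P : pred I) (F : I -> 'rV[R]_d) :
  enorm (\sum_(i <- r | P i) F i) <= \sum_(i <- r | P i) enorm (F i).
Proof.
elim/big_rec2: _ => [|i y1 y2 _ H].
  by rewrite /enorm big1 ?sqrtr0 // => k _; rewrite mxE expr0n.
exact: le_trans (enormD _ _) (lerD (lexx _) H).
Qed.
End EN.

Section AP.
Context {R : realType} {n d : nat}.

Definition app (M : 'M[R]_n) (v : 'I_n -> 'rV[R]_d) (i : 'I_n) : 'rV[R]_d :=
  \sum_j M i j *: v j.

Lemma appM (A B : 'M[R]_n) v i : app (A *m B) v i = app A (app B v) i.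
Proof.
rewrite /app.
under eq_bigr do rewrite mxE scaler_suml.
rewrite exchange_big /=; apply: eq_bigr => k _.
by rewrite scaler_sumr; apply: eq_bigr => j _; rewrite scalerA.
Qed.

Lemma app1 v i : app 1%:M v i = v i.
Proof.
rewrite /app (bigD1 i) //= big1 ?addr0; first by rewrite mxE eqxx scale1r.
by move=> j /negbTE ji; rewrite mxE eq_sym ji scale0r.
Qed.

Lemma appD M v w i : app M (fun j => v j + w j) i = app M v i + app M w i.
Proof. by rewrite /app -big_split; apply: eq_bigr => j _; rewrite scalerDr. Qed.

Lemma app_sum M (m : nat) (v : 'I_m -> 'I_n -> 'rV[R]_d) i :
  app M (fun j => \sum_(s < m) v s j) i = \sum_(s < m) app M (v s) i.
Proof.
rewrite /app exchange_big /=; apply: eq_bigr => j _; by rewrite scaler_sumr.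
Qed.

Lemma app_ext M v w i : (forall j, v j = w j) -> app M v i = app M w i.
Proof. by move=> H; apply: eq_bigr => j _; rewrite H. Qed.

Lemma Phi_nn (W : nat -> 'M[R]_n) t : Phi_W W t t = 1%:M.
Proof. by rewrite /Phi_W subnn. Qed.

Lemma Phi_S (W : nat -> 'M[R]_n) t s : (s <= t)%N ->
  Phi_W W t.+1 s = W t *m Phi_W W t s.
Proof. by move=> st; rewrite /Phi_W subSn //= subnKC. Qed.

Lemma closed_form (W : nat -> 'M[R]_n) (X P Q : nat -> 'I_n -> 'rV[R]_d) :
  (forall t i, X t.+1 i = app (W t) (fun j => X t j + P t j) i + Q t i) ->
  forall t i, X t i = app (Phi_W W t 0) (X 0%N) i
     + \sum_(s < t) app (Phi_W W t s) (P s) i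
     + \sum_(s < t) app (Phi_W W t s.+1) (Q s) i.
Proof.
move=> HX; elim=> [|t IH] i.
  by rewrite !big_ord0 !addr0 Phi_nn app1.
rewrite HX appD; erewrite app_ext; last exact: IH.
rewrite !appD (app_sum (W t) t (fun s : 'I_t => app (Phi_W W t s) (P s)))
  (app_sum (W t) t (fun s : 'I_t => app (Phi_W W t s.+1) (Q s))) -appM -Phi_S //.
rewrite !big_ord_recr /= Phi_nn app1 (@Phi_S W t t (leqnn t)) Phi_nn mulmx1.
have -> : \sum_(s < t) app (W t) (app (Phi_W W t s) (P s)) i
   = \sum_(s < t) app (Phi_W W t.+1 s) (P s) i.
  by apply: eq_bigr => s _; rewrite -appM Phi_S // ltnW.
have -> : \sum_(s < t) app (W t) (app (Phi_W W t s.+1) (Q s)) i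
   = \sum_(s < t) app (Phi_W W t.+1 s.+1) (Q s) i.
  by apply: eq_bigr => s _; rewrite -appM Phi_S.
rewrite -!addrA; congr (_ + _); congr (_ + _); exact: addrCA.
Qed.

End AP.
Section YS.
Context {R : realType} {n d : nat}.

Lemma y_closed (W : nat -> 'M[R]_n) (Y : nat -> 'I_n -> R) :
  (forall i, Y 0%N i = 1) -> (forall t i, Y t.+1 i = \sum_j W t i j * Y t j) ->
  forall t i, Y t i = \sum_j Phi_W W t 0 i j.
Proof.
move=> H0 HS; elim=> [|t IH] i.
  rewrite H0 Phi_nn (bigD1 i) //= big1 ?addr0; first by rewrite mxE eqxx.
  by move=> j /negbTE ji; rewrite mxE eq_sym ji.
rewrite HS Phi_S //.
under eq_bigr do rewrite IH mulr_sumr.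
rewrite exchange_big /=; apply: eq_bigr => k _; by rewrite mxE.
Qed.

Lemma sum_closed (W : nat -> 'M[R]_n) (X P Q : nat -> 'I_n -> 'rV[R]_d) :
  (forall t j, \sum_i W t i j = 1) ->
  (forall t i, X t.+1 i = app (W t) (fun j => X t j + P t j) i + Q t i) ->
  forall t, \sum_i X t i = \sum_i X 0%N i + \sum_(s < t) (\sum_j P s j + \sum_j Q s j).
Proof.
move=> HW HX; elim=> [|t IH]; first by rewrite big_ord0 addr0.
rewrite big_ord_recr /= addrA -IH.
under eq_bigr do rewrite HX.
rewrite big_split /= /app exchange_big /=.
under eq_bigr do rewrite -scaler_suml HW scale1r.
by rewrite big_split /= addrA.
Qed.

Lemma sum_cond (I : finType) (P : pred I) (F : I -> 'rV[R]_d) :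
  (forall j, ~~ P j -> F j = 0) -> \sum_(j | P j) F j = \sum_j F j.
Proof.
move=> H; rewrite big_mkcond /=; apply: eq_bigr => j _.
by case: ifP => // /negbT /H ->.
Qed.

Lemma sum_condR (I : finType) (P : pred I) (F : I -> R) :
  (forall j, ~~ P j -> F j = 0) -> \sum_(j | P j) F j = \sum_j F j.
Proof.
move=> H; rewrite big_mkcond /=; apply: eq_bigr => j _.
by case: ifP => // /negbT /H ->.
Qed.

End YS.
Section MB.
Context {R : realType} {n d : nat}.

Definition err (M : 'M[R]_n) (ph : R) (i : 'I_n) (v : 'I_n -> 'rV[R]_d) : 'rV[R]_d :=
  \sum_j (M i j - ph) *: v j.

Lemma decomp (M : 'M[R]_n) ph i (v : 'I_n -> 'rV[R]_d) : app M v i = ph *: \sum_j v j + err M ph i v.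
Proof.
rewrite /app /err scaler_sumr -big_split /=; apply: eq_bigr => j _.
by rewrite -scalerDl addrC subrK.
Qed.

Lemma err_bound (M : 'M[R]_n) (ph : R) i (v : 'I_n -> 'rV[R]_d) (c : R) : (forall j, `|M i j - ph| <= c) ->
  enorm (err M ph i v) <= c * \sum_j enorm (v j).
Proof.
move=> H; apply: le_trans (enorm_sum _ _ _ _) _.
rewrite mulr_sumr; apply: ler_sum => j _; rewrite enormZ.
by apply: ler_wpM2r; [exact: enorm_ge0 | exact: H].
Qed.

Lemma identity (W : nat -> 'M[R]_n) (X P Q : nat -> 'I_n -> 'rV[R]_d)
  (Y : nat -> 'I_n -> R) (ph : R) t i :
  (forall t j, \sum_i W t i j = 1) ->
  (forall t i, X t.+1 i = app (W t) (fun j => X t j + P t j) i + Q t i) ->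
  (forall i, Y 0%N i = 1) -> (forall t i, Y t.+1 i = \sum_j W t i j * Y t j) ->
  (0 < n)%N ->
  let c := \sum_j (Phi_W W t.+1 0 i j - ph) in
  let S := \sum_k X t k in
  X t.+1 i - Y t.+1 i *: ((n%:R)^-1 *: S) =
    err (Phi_W W t.+1 0) ph i (X 0%N) - (c / n%:R) *: S
    + \sum_(s < t) (err (Phi_W W t.+1 s) ph i (P s) + err (Phi_W W t.+1 s.+1) ph i (Q s))
    + (ph *: \sum_j P t j + err (Phi_W W t.+1 t) ph i (P t) + Q t i).
Proof.
move=> Hcol HX HY0 HYS n0 c S.
have -> : Y t.+1 i *: ((n%:R)^-1 *: S) = (ph + c / n%:R) *: S.
  rewrite scalerA (y_closed _ _ HY0 HYS) /c; congr (_ *: _).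
  have nz : (n%:R : R) != 0 by rewrite pnatr_eq0 -lt0n.
  rewrite sumrB sumr_const card_ord -mulr_natr; field; exact: nz.
rewrite (closed_form _ _ _ _ HX) /S (sum_closed _ _ _ _ Hcol HX).
rewrite !big_ord_recr /= Phi_nn app1.
rewrite (decomp (Phi_W W t.+1 0) ph) (decomp (Phi_W W t.+1 t) ph).
have -> : \sum_(s < t) app (Phi_W W t.+1 s) (P s) i =
   \sum_(s < t) (ph *: \sum_j P s j + err (Phi_W W t.+1 s) ph i (P s)).
  by apply: eq_bigr => s _; rewrite (decomp _ ph).
have -> : \sum_(s < t) app (Phi_W W t.+1 s.+1) (Q s) i =
   \sum_(s < t) (ph *: \sum_j Q s j + err (Phi_W W t.+1 s.+1) ph i (Q s)).
  by apply: eq_bigr => s _; rewrite (decomp _ ph).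
rewrite !big_split /= -!scaler_sumr.
apply/rowP => k; rewrite !mxE; ring.
Qed.

End MB.
Section MB2.
Context {R : realType} {n d : nat}.

Lemma main_bound (W : nat -> 'M[R]_n) (X P Q : nat -> 'I_n -> 'rV[R]_d)
  (Y : nat -> 'I_n -> R) (phi : nat -> 'I_n -> R) (mu : R) (a : nat -> R) t i :
  (forall t j, \sum_i W t i j = 1) ->
  (forall t i, X t.+1 i = app (W t) (fun j => X t j + P t j) i + Q t i) ->
  (forall i, Y 0%N i = 1) -> (forall t i, Y t.+1 i = \sum_j W t i j * Y t j) ->
  (0 < n)%N -> 0 < mu -> mu <= 1 ->
  (forall i, 0 <= phi t i) -> \sum_i phi t i = 1 ->
  (forall i j s, (s <= t)%N -> `|Phi_W W t.+1 s i j - phi t i| <= 4 * mu ^+ (t - s)) ->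
  (forall s, \sum_j enorm (P s j) + \sum_j enorm (Q s j) <= a s) ->
  enorm (X t.+1 i - Y t.+1 i *: ((n%:R)^-1 *: \sum_k X t k))
   <= 8 * mu ^+ t * \sum_k enorm (X 0%N k)
      + 8 / mu * \sum_(s < t.+1) mu ^+ (t - s) * a s.
Proof.
move=> Hcol HX HY0 HYS n0 mu0 mu1 phi0 phi1 Hphi Ha.
rewrite (identity _ _ _ _ _ (phi t i) t i Hcol HX HY0 HYS n0) /=.
set ph := phi t i.
set Xn := \sum_k enorm (X 0%N k).
pose A s := \sum_j enorm (P s j).
pose B s := \sum_j enorm (Q s j).
have A0 s : 0 <= A s by apply: sumr_ge0 => j _; exact: enorm_ge0.
have B0 s : 0 <= B s by apply: sumr_ge0 => j _; exact: enorm_ge0.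
have Xn0 : 0 <= Xn by apply: sumr_ge0 => j _; exact: enorm_ge0.
have mut0 k : 0 <= mu ^+ k by rewrite exprn_ge0 // ltW.
have h0 : enorm (err (Phi_W W t.+1 0) ph i (X 0%N)) <= 4 * mu ^+ t * Xn.
  apply: err_bound => j; have := Hphi i j 0%N (leq0n t); by rewrite subn0.
have hc : `|(\sum_j (Phi_W W t.+1 0 i j - ph)) / n%:R| <= 4 * mu ^+ t.
  have nR : (0 : R) < n%:R by rewrite ltr0n.
  rewrite normrM normfV normr_nat ler_pdivrMr //.
  apply: le_trans (ler_norm_sum _ _ _) _.
  apply: le_trans (ler_sum _ (fun j _ => Hphi i j 0%N (leq0n t))) _.
  by rewrite subn0 sumr_const card_ord mulr_natr.
have hS : enorm (\sum_k X t k) <= Xn + \sum_(s < t) (A s + B s).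
  rewrite (sum_closed _ _ _ _ Hcol HX).
  apply: le_trans (enormD _ _) _; apply: lerD; first exact: enorm_sum.
  apply: le_trans (enorm_sum _ _ _ _) _; apply: ler_sum => s _.
  apply: le_trans (enormD _ _) _; apply: lerD; exact: enorm_sum.
have hsum : enorm (\sum_(s < t) (err (Phi_W W t.+1 s) ph i (P s)
                  + err (Phi_W W t.+1 s.+1) ph i (Q s)))
      <= \sum_(s < t) 4 * mu ^+ (t - s.+1) * (A s + B s).
  apply: le_trans (enorm_sum _ _ _ _) _; apply: ler_sum => s _.
  apply: le_trans (enormD _ _) _; rewrite mulrDr; apply: lerD.
  - apply: err_bound => j; apply: le_trans (Hphi i j s _) _; first by rewrite ltnW.
    apply: ler_wpM2l => //; apply: ler_wiXn2l; [exact: ltW | exact: mu1 |].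
    by rewrite subnS leq_pred.
  - apply: err_bound => j; exact: Hphi.
have ph1 : ph <= 1.
  rewrite -phi1 (bigD1 i) //= lerDl; apply: sumr_ge0 => j _; exact: phi0.
have ph0 : 0 <= ph := phi0 i.
have hlast : enorm (ph *: \sum_j P t j + err (Phi_W W t.+1 t) ph i (P t) + Q t i)
      <= 5 * A t + B t.
  apply: le_trans (enormD _ _) _; apply: lerD; last first.
    rewrite /B (bigD1 i) //= lerDl; apply: sumr_ge0 => j _; exact: enorm_ge0.
  apply: le_trans (enormD _ _) _.
  have e1 : enorm (ph *: \sum_j P t j) <= A t.
    rewrite enormZ ger0_norm //; apply: le_trans (ler_wpM2l ph0 (enorm_sum _ _ _ _)) _.
    rewrite -[X in _ <= X]mul1r; apply: ler_wpM2r; [exact: (A0 t) | exact: ph1].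
  have e2 : enorm (err (Phi_W W t.+1 t) ph i (P t)) <= 4 * A t.
    have := err_bound (Phi_W W t.+1 t) ph i (P t) (4 * mu ^+ (t - t)).
    rewrite subnn expr0 mulr1; apply => j; have := Hphi i j t (leqnn t); by rewrite subnn expr0 mulr1.
  have -> : 5 * A t = A t + 4 * A t by ring.
  exact: lerD.
set N := \sum_(s < t) _.
have hN : enorm (err (Phi_W W t.+1 0) ph i (X 0%N) -
        ((\sum_j (Phi_W W t.+1 0 i j - ph)) / n%:R) *: \sum_k X t k + N +
        (ph *: \sum_j P t j + err (Phi_W W t.+1 t) ph i (P t) + Q t i))
   <= 4 * mu ^+ t * Xn + 4 * mu ^+ t * (Xn + \sum_(s < t) (A s + B s))
      + \sum_(s < t) 4 * mu ^+ (t - s.+1) * (A s + B s) + (5 * A t + B t).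
  apply: le_trans (enormD _ _) _; apply: lerD => //.
  apply: le_trans (enormD _ _) _; apply: lerD => //.
  apply: le_trans (enormB _ _) _; apply: lerD => //.
  rewrite enormZ; apply: ler_pM => //; exact: enorm_ge0.
apply: le_trans hN _.
rewrite big_ord_recr /= subnn expr0 mul1r mulrDr.
have hs : 4 * mu ^+ t * \sum_(s < t) (A s + B s)
     + \sum_(s < t) 4 * mu ^+ (t - s.+1) * (A s + B s)
   <= 8 / mu * \sum_(s < t) mu ^+ (t - s) * a s.
  rewrite !mulr_sumr -big_split; apply: ler_sum => s _.
  have e : mu ^+ (t - s) = mu * mu ^+ (t - s.+1) by rewrite -exprS subnSK.
  have le : mu ^+ t <= mu ^+ (t - s.+1).
    by apply: ler_wiXn2l; [exact: ltW | exact: mu1 | exact: leq_subr].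
  have e8 : 8 / mu * (mu ^+ (t - s) * a s) = 8 * mu ^+ (t - s.+1) * a s.
    rewrite e; field; exact: lt0r_neq0.
  rewrite e8.
  have h1 : A s + B s <= a s := Ha s.
  have h2 : 0 <= (mu ^+ (t - s.+1) - mu ^+ t) * (A s + B s).
    by apply: mulr_ge0; [rewrite subr_ge0 | exact: addr_ge0].
  have h3 : 0 <= mu ^+ (t - s.+1) * (a s - (A s + B s)).
    by apply: mulr_ge0; [exact: mut0 | rewrite subr_ge0].
  have h4 : 0 <= mu ^+ t * (A s + B s) by apply: mulr_ge0; [exact: mut0 | exact: addr_ge0].
  suff : 4 * mu ^+ t * (A s + B s) + 4 * mu ^+ (t - s.+1) * (A s + B s) <= 8 * mu ^+ (t - s.+1) * a s by [].
  nra.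
have ht : 5 * A t + B t <= 8 / mu * a t.
  have imu : 1 <= mu^-1 by rewrite invf_ge1.
  have h1 : A t + B t <= a t := Ha t.
  have h5 : 0 <= (mu^-1 - 1) * a t.
    by apply: mulr_ge0; [rewrite subr_ge0 | apply: le_trans h1; exact: addr_ge0].
  have := A0 t; have := B0 t.
  move=> ? ?; nra.
lra.
Qed.
End MB2.
Section GEO.
Context {R : realType}.

Lemma geoL0 (mu : R) e m :
  (\sum_(0 <= s < m) mu ^+ (e + (m - s.+1))) * (1 - mu) = mu ^+ e - mu ^+ (e + m).
Proof.
elim: m => [|m IH]; first by rewrite big_geq // mul0r addn0 subrr.
rewrite big_nat_recl // subSS subn0 mulrDl.
have -> : \sum_(0 <= i < m) mu ^+ (e + (m.+1 - i.+1.+1)) = \sum_(0 <= s < m) mu ^+ (e + (m - s.+1)).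
  by apply: eq_bigr => s _; rewrite subSS.
rewrite IH addnS exprS; ring.
Qed.

Lemma geo_le (mu : R) e m : 0 < mu < 1 ->
  \sum_(0 <= s < m) mu ^+ (e + (m - s.+1)) <= mu ^+ e / (1 - mu).
Proof.
case/andP => m0 m1.
have p : 0 < 1 - mu by rewrite subr_gt0.
rewrite ler_pdivlMr // geoL0 lerBlDr lerDl; apply: exprn_ge0; exact: ltW.
Qed.

Lemma anti_alpha (alpha : nat -> R) : (forall t, alpha t.+1 <= alpha t) ->
  forall m k, (m <= k)%N -> alpha k <= alpha m.
Proof.
move=> H m k /subnKC <-; elim: (k - m)%N => [|j IH]; first by rewrite addn0.
by rewrite addnS; apply: le_trans (H _) IH.
Qed.

Lemma split_bound (mu : R) (alpha : nat -> R) t : 0 < mu < 1 ->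
  (forall t, 0 < alpha t) -> (forall t, alpha t.+1 <= alpha t) ->
  \sum_(0 <= s < t.+1) mu ^+ (t - s) * alpha s
  <= (alpha 0%N * powR mu (t%:R / 2) + alpha (uphalf t)) / (1 - mu).
Proof.
move=> /[dup] mu01 /andP [m0 m1] apos anti.
have p : 0 < 1 - mu by rewrite subr_gt0.
set h := uphalf t.
have hfacts : (h <= t)%N /\ (t <= 2 * (t - h + 1))%N.
  have ho := odd_double_half t; have uh := uphalf_half t.
  rewrite /h uh; move: ho; rewrite -addnn.
  case: (odd t) => /=; move: (t./2) => k; lia.
case: hfacts => ht ht2.
have a0 := apos 0%N; have ah := apos h.
rewrite (@big_cat_nat _ _ _ h) //=; last exact: leqW.
have low : \sum_(0 <= s < h) mu ^+ (t - s) * alpha s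
    <= alpha 0%N * (mu ^+ (t - h + 1) / (1 - mu)).
  apply: le_trans (_ : _ <= alpha 0%N * \sum_(0 <= s < h) mu ^+ ((t - h + 1) + (h - s.+1))) _.
    rewrite mulr_sumr big_nat [X in _ <= X]big_nat; apply: ler_sum => s /andP [_ sh].
    have -> : (t - h + 1 + (h - s.+1) = t - s)%N by lia.
    rewrite mulrC; apply: ler_wpM2r; first by apply: exprn_ge0; exact: ltW.
    exact: anti_alpha.
  by apply: ler_wpM2l; [exact: ltW | exact: geo_le].
have up : \sum_(h <= s < t.+1) mu ^+ (t - s) * alpha s <= alpha h * (1 / (1 - mu)).
  apply: le_trans (_ : _ <= alpha h * \sum_(h <= s < t.+1) mu ^+ (t - s)) _.
    rewrite mulr_sumr big_nat [X in _ <= X]big_nat; apply: ler_sum => s /andP [hs _].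
    rewrite mulrC; apply: ler_wpM2r; first by apply: exprn_ge0; exact: ltW.
    exact: anti_alpha.
  apply: ler_wpM2l; first exact: ltW.
  rewrite -{1}(add0n h) big_addn.
  have := geo_le mu 0 (t.+1 - h) mu01; rewrite expr0; apply: le_trans.
  rewrite le_eqVlt; apply/orP; left; apply/eqP; rewrite !big_nat; apply: eq_bigr => k /andP [_ kh].
  congr (_ ^+ _); lia.
have pw : mu ^+ (t - h + 1) <= powR mu (t%:R / 2).
  rewrite -powR_mulrn; last exact: ltW.
  apply: ger_powR; first by rewrite m0 ltW.
  rewrite ler_pdivrMr // -natrM ler_nat; lia.
have : alpha 0%N * (mu ^+ (t - h + 1) / (1 - mu)) <= alpha 0%N * (powR mu (t%:R / 2) / (1 - mu)).
  apply: ler_wpM2l; first exact: ltW.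
  by apply: ler_wpM2r; [rewrite invr_ge0 ltW | exact: pw].
move: low up; rewrite mulrDl; lra.
Qed.
End GEO.
Theorem mainTheorem13 (R : realType) (n d L : nat)
  (E : nat -> rel 'I_n) (W : nat -> 'M[R]_n) (beta : R)
  (f : 'I_n -> 'rV[R]_d -> R) (sigma : 'I_n -> nat -> bool) (alpha : nat -> R)
  (x : nat -> 'I_n -> 'rV[R]_d) (y : nat -> 'I_n -> R)
  (z : nat -> 'I_n -> 'rV[R]_d) (g : nat -> 'I_n -> 'rV[R]_d)
  (G eta mu : R) :
  (0 < n)%N ->
  (* graphs with self-arcs *)
  (forall t i, E t i i) ->
  (* weights *)
  0 < beta ->
  (forall t i j, E t j i -> beta <= W t i j) ->
  (forall t i j, ~~ E t j i -> W t i j = 0) ->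
  (forall t i, \sum_(k | E t i k) W t k i = 1) ->
  (* uniform strong connectivity *)
  USC E L ->
  (* the algorithm *)
  (forall i, convex_fun (f i)) ->
  (forall t, 0 < alpha t) ->
  (forall t i, x t.+1 i =
     \sum_(j | E t j i) W t i j *:
         (x t j - (alpha t * (sigma j t)%:R) *: g t j)
     - (alpha t * (1 - (sigma i t)%:R)) *: g t i) ->
  (forall i, y 0%N i = 1) ->
  (forall t i, y t.+1 i = \sum_(j | E t j i) W t i j * y t j) ->
  (forall t i, z t i = (y t i)^-1 *: x t i) ->
  (forall t i, is_subgradient (f i) (z t i) (g t i)) ->
  (* bounded subgradients *)
  0 < G ->
  (forall t i, enorm (g t i) <= G) ->
  (* constants eta, mu *)
  0 < eta ->
  (forall t i, eta <= y t i) ->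
  0 < mu < 1 ->
  (exists phi : nat -> 'I_n -> R,
     (forall t i, 0 <= phi t i) /\ (forall t, \sum_i phi t i = 1) /\
     (forall i j t s, (s <= t)%N ->
        `| Phi_W W t.+1 s i j - phi t i | <= 4 * mu ^+ (t - s))) ->
  (forall t i,
     enorm (z t.+1 i - (n%:R)^-1 *: \sum_k x t k)
     <= 8 / eta * mu ^+ t * \sum_k enorm (x 0%N k)
        + 8 * n%:R * G / (eta * mu) * \sum_(0 <= s < t.+1) mu ^+ (t - s) * alpha s)
  /\
  ((forall t, 0 < alpha t) ->
   (forall t, alpha t.+1 <= alpha t) ->
   (fun N => \sum_(0 <= k < N) alpha k) @ \oo --> +oo ->
   cvg ((fun N => \sum_(0 <= k < N) alpha k ^+ 2) @ \oo) ->
   forall t i,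
     enorm (z t.+1 i - (n%:R)^-1 *: \sum_k x t k)
     <= 8 / eta * mu ^+ t * \sum_k enorm (x 0%N k)
        + 8 * n%:R * G / (eta * mu * (1 - mu))
          * (alpha 0%N * powR mu (t%:R / 2) + alpha (uphalf t))).
Proof.
move=> n0 Eii b0 Wb W0 Wcol Husc convf apos Hx Hy0 Hy Hz Hsub G0 Hg eta0 Hye mu01
  [phi [phi0 [phi1 Hphi]]].
case/andP: (mu01) => m0 m1.
pose P t j := - ((alpha t * (sigma j t)%:R) *: g t j).
pose Q t i := - ((alpha t * (1 - (sigma i t)%:R)) *: g t i).
have HX : forall t i, x t.+1 i = app (W t) (fun j => x t j + P t j) i + Q t i.
  move=> t i; rewrite Hx sum_cond; last by move=> j nE; rewrite W0 // scale0r.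
  by [].
have Hcol : forall t j, \sum_i W t i j = 1.
  move=> t j; have := Wcol t j; rewrite sum_condR //; move=> k nE; exact: W0.
have HYS : forall t i, y t.+1 i = \sum_j W t i j * y t j.
  move=> t i; rewrite Hy sum_condR //; move=> j nE; by rewrite W0 // mul0r.
have Ha : forall s, \sum_j enorm (P s j) + \sum_j enorm (Q s j) <= n%:R * G * alpha s.
  move=> s; rewrite -big_split /=.
  apply: le_trans (_ : _ <= \sum_(j : 'I_n) (alpha s * G)) _.
    apply: ler_sum => j _; rewrite /P /Q !enormN !enormZ.
    have al := apos s.
    case: (sigma j s) => /=; rewrite ?mulr1n ?mulr0n ?subrr ?subr0 ?mulr0 ?mulr1 ?normr0 ?mul0r ?add0r ?addr0
      ger0_norm; try exact: ltW; exact: (ler_wpM2l (ltW al) (Hg s j)).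
  by rewrite sumr_const card_ord -mulr_natl le_eqVlt; apply/orP; left; apply/eqP; ring.
have B1 : forall t i,
     enorm (z t.+1 i - (n%:R)^-1 *: \sum_k x t k)
     <= 8 / eta * mu ^+ t * \sum_k enorm (x 0%N k)
        + 8 * n%:R * G / (eta * mu) * \sum_(0 <= s < t.+1) mu ^+ (t - s) * alpha s.
  move=> t i.
  have yp : 0 < y t.+1 i := lt_le_trans eta0 (Hye _ _).
  have eqz : z t.+1 i - (n%:R)^-1 *: \sum_k x t k =
      (y t.+1 i)^-1 *: (x t.+1 i - y t.+1 i *: ((n%:R)^-1 *: \sum_k x t k)).
    by rewrite Hz scalerBr scalerA mulVf ?scale1r // gt_eqF.
  rewrite eqz enormZ ger0_norm; last by rewrite invr_ge0 ltW.
  have MB := main_bound W x P Q y phi mu (fun s => n%:R * G * alpha s) t i Hcol HX Hy0 HYS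
     n0 m0 (ltW m1) (phi0 t) (phi1 t) (fun i j s => Hphi i j t s) Ha.
  have e0 := enorm_ge0 (x t.+1 i - y t.+1 i *: ((n%:R)^-1 *: \sum_k x t k)).
  apply: le_trans (_ : _ <= eta^-1 * (8 * mu ^+ t * \sum_k enorm (x 0%N k) +
       8 / mu * \sum_(s < t.+1) mu ^+ (t - s) * (n%:R * G * alpha s))) _.
    apply: le_trans (ler_wpM2l _ MB) _; first by rewrite invr_ge0 ltW.
    apply: ler_wpM2r; first exact: le_trans e0 MB.
    by rewrite lef_pV2 ?Hye // posrE.
  have -> : \sum_(s < t.+1) mu ^+ (t - s) * (n%:R * G * alpha s)
      = n%:R * G * \sum_(s < t.+1) mu ^+ (t - s) * alpha s.
    by rewrite mulr_sumr; apply: eq_bigr => s _; ring.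
  rewrite big_mkord le_eqVlt; apply/orP; left; apply/eqP; field.
  by rewrite gt_eqF // gt_eqF.
split; first exact: B1.
move=> apos' anti _ _ t i.
apply: le_trans (B1 t i) _; apply: lerD => //.
have -> : 8 * n%:R * G / (eta * mu * (1 - mu)) *
   (alpha 0%N * powR mu (t%:R / 2) + alpha (uphalf t)) =
   8 * n%:R * G / (eta * mu) *
   ((alpha 0%N * powR mu (t%:R / 2) + alpha (uphalf t)) / (1 - mu)).
  field; rewrite gt_eqF ?subr_gt0 //= gt_eqF //= gt_eqF //.
apply: ler_wpM2l; last exact: split_bound.
apply: divr_ge0; first by apply: mulr_ge0; [apply: mulr_ge0; [by [] | exact: ler0n] | exact: ltW].
by apply: mulr_ge0; exact: ltW.
Qed.
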